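(* Let $W\in\mathbb{R}^{m\times n}$ have nonzero columns $w_1,\dots,w_n$, $F:=WW^\top$, $r:=\operatorname{rank}(W)\ge1$, $\ell_i:=w_i^\top F^+w_i$, $D_i:=\|w_i\|^4/(w_i^\top Fw_i)$ and $\sigma_i:=1-D_i/\ell_i$. Assume $\sum_{i=1}^nD_i\ge(1-\varepsilon)r$. Then for every $\tau\in(0,1)$, $$\frac1r\sum_{i:\sigma_i\ge\tau}\ell_i\le\frac{\varepsilon}{\tau}.$$
   Context: $F^+$ is the Moore–Penrose pseudoinverse of $F$. *)

(* Defs.v *)
From HB Require Import structures.
From mathcomp Require Import all_boot all_order all_algebra.
From mathcomp Require Import reals.
Set Implicit Arguments. Unset Strict Implicit. Unset Printing Implicit Defensive.
Import Order.TTheory GRing.Theory Num.Theory.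
Local Open Scope ring_scope.

(* Moore-Penrose pseudoinverse of a real matrix A : 'M_(p,q): X : 'M_(q,p)
   satisfying the four Penrose conditions (transpose = adjoint over R).
   Such an X exists and is unique. *)
Definition is_MP_pinv (R : realType) (p q : nat) (A : 'M[R]_(p, q)) (X : 'M[R]_(q, p)) : Prop :=
  [/\ A *m X *m A = A, X *m A *m X = X, (A *m X)^T = A *m X & (X *m A)^T = X *m A].

Definition qform (R : realType) (m : nat) (u : 'cV[R]_m) (M : 'M[R]_m) (v : 'cV[R]_m) : R :=
  (u^T *m M *m v) 0 0.

Definition sqnorm (R : realType) (m : nat) (u : 'cV[R]_m) : R := (u^T *m u) 0 0.

(* Main.v *)
Require Import Defs.
From HB Require Import structures.
From mathcomp Require Import all_boot all_order all_algebra.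
From mathcomp Require Import reals ring.
Import Order.TTheory GRing.Theory Num.Theory.
Local Open Scope ring_scope.

Lemma cancel_aux (F : fieldType) (k r : nat) (C : 'M[F]_(k, r)) (B : 'M[F]_(r, k))
  (X : 'M[F]_(r, k)) (B' : 'M[F]_(k, r)) :
  X *m C = 1%:M -> B *m B' = 1%:M -> C *m B *m (C *m B) = C *m B -> B *m C = 1%:M.
Proof.
move=> HX HB e.
have e2 : X *m (C *m B *m (C *m B)) *m B' = X *m (C *m B) *m B' by rewrite e.
rewrite !mulmxA HX mul1mx -!mulmxA HB mulmx1 in e2.
by rewrite e2.
Qed.

Lemma trace_idem (F : fieldType) (k : nat) (P : 'M[F]_k) :
  P *m P = P -> \tr P = (\rank P)%:R.
Proof.
move=> PP.
have hC := col_base_full P; have hB := row_base_free P.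
case/row_fullP: hC => X HX; case/row_freeP: hB => B' HB.
rewrite -{1}(mulmx_base P) mxtrace_mulC (@cancel_aux _ _ _ _ _ _ _ HX HB) ?mxtrace1 // mulmx_base PP //.
Qed.

Definition dot {R : realType} {k} (a b : 'cV[R]_k) : R := (a^T *m b) 0 0.

Lemma dotE (R : realType) k (a b : 'cV[R]_k) : dot a b = \sum_j a j 0 * b j 0.
Proof. by rewrite /dot mxE; apply: eq_bigr => j _; rewrite mxE. Qed.

Lemma dot_ge0 (R : realType) k (a : 'cV[R]_k) : 0 <= dot a a.
Proof. by rewrite dotE; apply: sumr_ge0 => j _; rewrite -expr2 sqr_ge0. Qed.

Lemma dot_eq0 (R : realType) k (a : 'cV[R]_k) : dot a a = 0 -> a = 0.
Proof.
rewrite dotE => /eqP; rewrite psumr_eq0; last by move=> j _; rewrite -expr2 sqr_ge0.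
move/allP => H; apply/matrixP => j z; rewrite (ord1 z) mxE.
have := H j (mem_index_enum j); rewrite /= mulf_eq0 orbb => /eqP //.
Qed.

Lemma sumsq_id (R : realType) k (a b : 'cV[R]_k) (x y : R) :
  \sum_j (x * a j 0 - y * b j 0) ^+ 2 = x ^+ 2 * dot a a - 2 * x * y * dot a b + y ^+ 2 * dot b b.
Proof.
rewrite !dotE !mulr_sumr -sumrB -big_split /=.
by apply: eq_bigr => j _; ring.
Qed.

Lemma CS (R : realType) k (a b : 'cV[R]_k) : 0 < dot b b ->
  dot a b ^+ 2 <= dot a a * dot b b.
Proof.
move=> hb.
have h : 0 <= \sum_j (dot b b * a j 0 - dot a b * b j 0) ^+ 2.
  by apply: sumr_ge0 => j _; rewrite sqr_ge0.
rewrite sumsq_id in h.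
have : 0 <= dot b b * (dot b b * dot a a - dot a b ^+ 2).
  by move: h; congr (0 <= _); ring.
by rewrite pmulr_rge0 // subr_ge0 mulrC.
Qed.

Lemma MMt0 (R : realType) p q (M : 'M[R]_(p, q)) : M *m M^T = 0 -> M = 0.
Proof.
move=> H; apply/matrixP => i j; rewrite mxE.
have : (M *m M^T) i i = 0 by rewrite H mxE.
rewrite mxE => /eqP; rewrite psumr_eq0; last by move=> l _; rewrite mxE -expr2 sqr_ge0.
move/allP => H2; have := H2 j (mem_index_enum j).
by rewrite /= mxE mulf_eq0 orbb => /eqP.
Qed.

Lemma projW (R : realType) m n (W : 'M[R]_(m, n)) (Fp : 'M[R]_m) :
  is_MP_pinv (W *m W^T) Fp -> W = W *m W^T *m Fp *m W.
Proof.
case=> h1 h2 h3 h4.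
apply/eqP; rewrite -subr_eq0; apply/eqP; apply: MMt0.
rewrite linearB /= trmx_mul -mulmxA h3 mulmxBl !mulmxBr !mulmxA.
have h1' : W *m W^T *m Fp *m W *m W^T = W *m W^T by rewrite !mulmxA in h1.
by rewrite h1' subrr.
Qed.

Lemma col_facts (R : realType) m n (W : 'M[R]_(m, n)) (Fp : 'M[R]_m) (w : 'cV[R]_m) :
  W *m W^T *m Fp *m w = w -> w != 0 ->
  0 < qform w Fp w /\ sqnorm w ^+ 2 / qform w (W *m W^T) w <= qform w Fp w.
Proof.
move=> hw wn0.
set y := W^T *m Fp *m w; set z := W^T *m w.
have hz : qform w (W *m W^T) w = dot z z.
  by rewrite /qform /dot /z trmx_mul trmxK !mulmxA.
have hzy : dot z y = sqnorm w.
  rewrite /dot /y /z trmx_mul trmxK.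
  have -> : w^T *m W *m (W^T *m Fp *m w) = w^T *m (W *m W^T *m Fp *m w) by rewrite !mulmxA.
  by rewrite hw.
have hyy : dot y y = qform w Fp w.
  rewrite /dot /y !trmx_mul trmxK.
  have -> : w^T *m (Fp^T *m W) *m (W^T *m Fp *m w) = w^T *m Fp^T *m (W *m W^T *m Fp *m w) by rewrite !mulmxA.
  rewrite hw.
  have <- : (w^T *m Fp *m w)^T = w^T *m Fp^T *m w by rewrite !trmx_mul trmxK mulmxA.
  by rewrite /qform mxE.
have hww : 0 < sqnorm w.
  have -> : sqnorm w = dot w w by [].
  rewrite lt_def dot_ge0 andbT; apply/eqP => /dot_eq0 w0; by rewrite w0 eqxx in wn0.
have hl : 0 < qform w Fp w.
  rewrite -hyy lt_def dot_ge0 andbT; apply/eqP => /dot_eq0 y0.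
  move: wn0; rewrite -hw -!mulmxA.
  have -> : W *m (W^T *m (Fp *m w)) = W *m y by rewrite /y !mulmxA.
  by rewrite y0 mulmx0 eqxx.
split => //.
have hcs : dot z y ^+ 2 <= dot z z * dot y y by apply: CS; rewrite hyy.
rewrite hzy hyy -hz in hcs.
have hq : 0 < qform w (W *m W^T) w.
  rewrite lt_def hz dot_ge0 andbT; apply/eqP => q0.
  move: hcs; rewrite hz q0 mul0r => h.
  have : 0 < sqnorm w ^+ 2 by rewrite exprn_gt0.
  by rewrite ltNge h.
by rewrite ler_pdivrMr // mulrC.
Qed.

Lemma delta_entry (R : realType) k (M : 'M[R]_k) i :
  (delta_mx 0 i *m M *m delta_mx i 0 : 'M[R]_1) 0 0 = M i i.
Proof. by rewrite -rowE -colE !mxE. Qed.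

Lemma sum_ell (R : realType) m n (W : 'M[R]_(m, n)) (Fp : 'M[R]_m) :
  is_MP_pinv (W *m W^T) Fp ->
  \sum_(i < n) qform (col i W) Fp (col i W) <= (\rank W)%:R.
Proof.
case=> h1 h2 h3 h4.
have -> : \sum_(i < n) qform (col i W) Fp (col i W) = \tr (W^T *m Fp *m W).
  rewrite /mxtrace; apply: eq_bigr => i _.
  by rewrite /qform tr_col rowE colE -(@delta_entry _ _ (W^T *m Fp *m W) i) !mulmxA.
rewrite -mulmxA mxtrace_mulC -mulmxA trace_idem; last by rewrite (mulmxA (Fp *m _) Fp) h2.
rewrite ler_nat (leq_trans (mxrankM_maxr _ _)) // mxrankM_maxl //.
Qed.

Theorem mainTheorem18 (R : realType) (m n : nat) (W : 'M[R]_(m, n))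
    (Fp : 'M[R]_m) (eps tau : R) :
  (forall i : 'I_n, col i W != 0) ->
  (0 < \rank W)%N ->
  is_MP_pinv (W *m W^T) Fp ->
  let F := W *m W^T in
  let r := (\rank W)%:R : R in
  let ell := fun i : 'I_n => qform (col i W) Fp (col i W) in
  let D := fun i : 'I_n => (sqnorm (col i W)) ^+ 2 / qform (col i W) F (col i W) in
  let sigma := fun i : 'I_n => 1 - D i / ell i in
  \sum_(i < n) D i >= (1 - eps) * r ->
  0 < tau < 1 ->
  r^-1 * \sum_(i < n | tau <= sigma i) ell i <= eps / tau.
Proof.
move=> Hcol Hr Hp F r ell D sigma HD /andP[t0 t1].
have hWp := @projW _ _ _ _ _ Hp.
have hcf : forall i, 0 < ell i /\ D i <= ell i.
  move=> i; apply: (@col_facts _ _ _ W Fp _ _ (Hcol i)).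
  by rewrite !colE mulmxA -hWp.
have hsl : forall i, sigma i * ell i = ell i - D i.
  move=> i; have [h _] := hcf i.
  by rewrite /sigma mulrBl mul1r mulfVK // gt_eqF.
have hsum : \sum_(i < n) ell i <= r by apply: sum_ell.
have hr : 0 < r by rewrite ltr0n.
have e1 : tau * \sum_(i < n | tau <= sigma i) ell i <= \sum_(i < n | tau <= sigma i) sigma i * ell i.
  rewrite mulr_sumr; apply: ler_sum => i hi.
  by apply: ler_wpM2r => //; have [h _] := hcf i; exact: ltW.
have e2 : \sum_(i < n | tau <= sigma i) sigma i * ell i <= \sum_(i < n) sigma i * ell i.
  rewrite [X in _ <= X](bigID (fun i => tau <= sigma i)) /= lerDl.
  apply: sumr_ge0 => i _; rewrite hsl subr_ge0; by have [_ h] := hcf i.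
have e3 : \sum_(i < n) sigma i * ell i = \sum_(i < n) ell i - \sum_(i < n) D i.
  by rewrite -sumrB; apply: eq_bigr => i _; rewrite hsl.
have key : tau * \sum_(i < n | tau <= sigma i) ell i <= eps * r.
  apply: (le_trans e1); apply: (le_trans e2); rewrite e3.
  have : \sum_(i < n) ell i - \sum_(i < n) D i <= r - (1 - eps) * r by apply: lerB.
  by move/le_trans; apply; rewrite mulrBl mul1r opprB addrC subrK.
rewrite mulrC ler_pdivrMr // mulrAC ler_pdivlMr // mulrC.
exact: key.
Qed.
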